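(* Let $(X,d)$ be a compact metric space with $\operatorname{diam}(X,d)=1/2$, with hyperbolic filling $\mathcal S$ whose parameters satisfy $a\ge\lambda\ge2$ and $\lambda\ge1+\frac{a}{a-1}$. Let $x,y\in X$ and let $(z,m),(w,n)\in\mathcal S$ with $x\in B(z,a^{-m})$, $y\in B(w,a^{-n})$ and $a^{-m}+a^{-n}<a^{-2}d(x,y)$. Then every $u\in c(x,y)$ is a $K$-approximate center, with $K=80$, of every geodesic triangle $[v_0,(z,m),(w,n)]$ in $(\tilde{\mathcal S},D_1)$.
   Context: Hyperbolic filling: $X_0\subset X_1\subset\cdots$ increasing, each $X_n$ a maximal $a^{-n}$-separated subset of $X$; $X_0=\{x_0\}$. $\mathcal S_n=\{(x,n):x\in X_n\}$, $\mathcal S=\bigcup_n\mathcal S_n$, $v_0=(x_0,0)$. $D_1$ is the graph distance on $\mathcal S$ for the graph where distinct $(x,n),(y,m)$ are adjacent iff either $n=m$ and $B(x,\lambda a^{-n})\cap B(y,\lambda a^{-n})\ne\emptyset$, or $|n-m|=1$ and $B(x,a^{-n})\cap B(y,a^{-m})\ne\emptyset$. $(\tilde{\mathcal S},D_1)$ is the geodesic metric space obtained from this graph by replacing each edge with an isometric copy of $[0,1]$ (so $\mathcal S\subset\tilde{\mathcal S}$ and $D_1$ extends the graph distance). A geodesic triangle $[p,q,r]$ is a union of geodesic segments $[p,q]\cup[q,r]\cup[r,p]$; a point $c$ is a $K$-approximate center of it if its distance to each of the three sides is at most $K$. For distinct $x,y\in X$, let $\tilde n$ be the largest integer such that $\{x,y\}\subset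 B(\tilde z,2a^{-\tilde n})$ for some $(\tilde z,\tilde n)\in\mathcal S$, and $c(x,y)=\{(\tilde z,\tilde n)\in\mathcal S:\{x,y\}\subset B(\tilde z,2a^{-\tilde n})\}$. *)

(* Defs.v *)
From Stdlib Require Import Reals Lra List ClassicalEpsilon.
Open Scope R_scope.

Definition ball {X : Type} (d : X -> X -> R) (c : X) (r : R) (y : X) : Prop :=
  d c y < r.

Definition is_metric {X : Type} (d : X -> X -> R) : Prop :=
  (forall x y, 0 <= d x y) /\
  (forall x y, d x y = 0 <-> x = y) /\
  (forall x y, d x y = d y x) /\
  (forall x y z, d x z <= d x y + d y z).

Definition is_open {X : Type} (d : X -> X -> R) (U : X -> Prop) : Prop :=
  forall x, U x -> exists r, 0 < r /\ forall y, ball d x r y -> U y.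

Definition compact_space {X : Type} (d : X -> X -> R) : Prop :=
  forall (I : Type) (U : I -> X -> Prop),
    (forall i, is_open d (U i)) -> (forall x, exists i, U i x) ->
    exists l : list I, forall x, exists i, In i l /\ U i x.

Definition diam_eq {X : Type} (d : X -> X -> R) (D : R) : Prop :=
  is_lub (fun r => exists x y : X, r = d x y) D.

Definition separated {X : Type} (d : X -> X -> R) (A : X -> Prop) (r : R) : Prop :=
  forall x y, A x -> A y -> x <> y -> r <= d x y.

Definition maximal_separated {X : Type} (d : X -> X -> R) (A : X -> Prop) (r : R) : Prop :=
  separated d A r /\
  forall B : X -> Prop, separated d B r -> (forall x, A x -> B x) -> forall x, B x -> A x.

Definition hyperbolic_filling {X : Type} (d : X -> X -> R) (a : R) (x0 : X)
  (Xs : nat -> X -> Prop) : Prop :=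
  (forall x, Xs 0%nat x <-> x = x0) /\
  (forall n x, Xs n x -> Xs (S n) x) /\
  (forall n, maximal_separated d (Xs n) (/ a ^ n)).

(* membership in S = union of S_n = {(x,n) : x in X_n} *)
Definition inS {X : Type} (Xs : nat -> X -> Prop) (v : X * nat) : Prop :=
  Xs (snd v) (fst v).

Definition adj {X : Type} (d : X -> X -> R) (a lam : R) (Xs : nat -> X -> Prop)
  (v w : X * nat) : Prop :=
  inS Xs v /\ inS Xs w /\ v <> w /\
  ( (snd v = snd w /\
      exists p, ball d (fst v) (lam / a ^ snd v) p /\ ball d (fst w) (lam / a ^ snd v) p)
    \/
    ((snd v = S (snd w) \/ snd w = S (snd v)) /\
      exists p, ball d (fst v) (/ a ^ snd v) p /\ ball d (fst w) (/ a ^ snd w) p) ).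

Inductive walk {V : Type} (E : V -> V -> Prop) : V -> V -> nat -> Prop :=
| walk0 v : walk E v v 0
| walkS v u w k : E v u -> walk E u w k -> walk E v w (S k).

Definition graph_dist {V : Type} (E : V -> V -> Prop) (v w : V) : R :=
  INR (epsilon (inhabits 0%nat)
         (fun k => walk E v w k /\ forall j, walk E v w j -> (k <= j)%nat)).

(* points of the metric graph: vertices, or a point at parameter t in (0,1)
   on the edge from v to w (the same point has two representations,
   (v,w,t) and (w,v,1-t); the distance below identifies them) *)
Inductive fpoint (V : Type) : Type :=
| FVert (v : V)
| FEdge (v w : V) (t : R).
Arguments FVert {V} v.
Arguments FEdge {V} v w t.

Definition fpoint_wf {V : Type} (VS : V -> Prop) (E : V -> V -> Prop) (p : fpoint V) : Prop :=
  match p with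
  | FVert v => VS v
  | FEdge v w t => E v w /\ 0 < t < 1
  end.

Definition dist_to_vertex {V : Type} (D : V -> V -> R) (p : fpoint V) (u : V) : R :=
  match p with
  | FVert v => D v u
  | FEdge v w t => Rmin (t + D v u) ((1 - t) + D w u)
  end.

(* the geodesic (length) metric of the graph with unit-length edges *)
Definition fdist {V : Type} (D : V -> V -> R) (p q : fpoint V) : R :=
  match p with
  | FVert v => dist_to_vertex D q v
  | FEdge v w t =>
      match q with
      | FVert u => dist_to_vertex D p u
      | FEdge v' w' s =>
          let base := Rmin (t + dist_to_vertex D q v) ((1 - t) + dist_to_vertex D q w) in
          if excluded_middle_informative (v = v' /\ w = w') then Rmin base (Rabs (t - s))
          else if excluded_middle_informative (v = w' /\ w = v')
               then Rmin base (Rabs (t - (1 - s)))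
               else base
      end
  end.

Definition is_geodesic {V : Type} (VS : V -> Prop) (E : V -> V -> Prop) (D : V -> V -> R)
  (p q : fpoint V) (gam : R -> fpoint V) : Prop :=
  let L := fdist D p q in
  gam 0 = p /\ gam L = q /\
  (forall s, 0 <= s <= L -> fpoint_wf VS E (gam s)) /\
  (forall s t, 0 <= s <= L -> 0 <= t <= L -> fdist D (gam s) (gam t) = Rabs (s - t)).

Definition segment {V : Type} (D : V -> V -> R) (p q : fpoint V) (gam : R -> fpoint V)
  (r : fpoint V) : Prop :=
  exists s, 0 <= s <= fdist D p q /\ r = gam s.

Definition dist_set_le {V : Type} (D : V -> V -> R) (c : fpoint V) (A : fpoint V -> Prop)
  (K : R) : Prop :=
  forall eps, 0 < eps -> exists r, A r /\ fdist D c r < K + eps.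

Definition approx_center {V : Type} (D : V -> V -> R) (K : R) (c p q r : fpoint V)
  (g1 g2 g3 : R -> fpoint V) : Prop :=
  dist_set_le D c (segment D p q g1) K /\
  dist_set_le D c (segment D q r g2) K /\
  dist_set_le D c (segment D r p g3) K.

Definition D1 {X : Type} (d : X -> X -> R) (a lam : R) (Xs : nat -> X -> Prop) :
  X * nat -> X * nat -> R :=
  graph_dist (adj d a lam Xs).

Definition filling_geodesic {X : Type} (d : X -> X -> R) (a lam : R) (Xs : nat -> X -> Prop)
  (p q : fpoint (X * nat)) (gam : R -> fpoint (X * nat)) : Prop :=
  is_geodesic (inS Xs) (adj d a lam Xs) (D1 d a lam Xs) p q gam.

Definition in_c {X : Type} (d : X -> X -> R) (a : R) (Xs : nat -> X -> Prop)
  (x y : X) (u : X * nat) : Prop :=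
  inS Xs u /\ ball d (fst u) (2 / a ^ snd u) x /\ ball d (fst u) (2 / a ^ snd u) y /\
  forall v, inS Xs v -> ball d (fst v) (2 / a ^ snd v) x -> ball d (fst v) (2 / a ^ snd v) y ->
    (snd v <= snd u)%nat.

(* Main.v *)
Require Import Defs.
From Stdlib Require Import Reals Lra Lia ClassicalEpsilon Classical.
Open Scope R_scope.

Section Main.
Variable X : Type.
Variable d : X -> X -> R.
Variables a lam : R.
Variable x0 : X.
Variable Xs : nat -> X -> Prop.
Hypothesis Hmet : is_metric d.
Hypothesis Ha : 13/5 <= a.
Hypothesis Hal : lam <= a.
Hypothesis Hla : 1 + a / (a - 1) <= lam.
Hypothesis Hfill : hyperbolic_filling d a x0 Xs.

Definition e (k : nat) : R := / a ^ k.
Notation E := (adj d a lam Xs).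
Notation D := (D1 d a lam Xs).

Lemma dnn p q : 0 <= d p q. Proof. apply Hmet. Qed.
Lemma dsym p q : d p q = d q p. Proof. apply Hmet. Qed.
Lemma dtri p q r : d p r <= d p q + d q r. Proof. apply Hmet. Qed.
Lemma dself p : d p p = 0. Proof. apply Hmet. reflexivity. Qed.

Lemma e_pos k : 0 < e k.
Proof. unfold e. apply Rinv_0_lt_compat, pow_lt. lra. Qed.
Lemma e_S k : e (S k) = e k / a.
Proof. unfold e. simpl. rewrite Rinv_mult. unfold Rdiv. ring. Qed.
Lemma e_add k j : e (k + j) = e k * e j.
Proof. unfold e. rewrite pow_add, Rinv_mult. ring. Qed.
Lemma e_le k k' : (k <= k')%nat -> e k' <= e k.
Proof. intro H. unfold e. apply Rinv_le_contravar. apply pow_lt; lra. apply Rle_pow; [lra|exact H]. Qed.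
Lemma e_lt k k' : (k < k')%nat -> e k' < e k.
Proof. intro H. unfold e. apply Rinv_lt_contravar. apply Rmult_lt_0_compat; apply pow_lt; lra.
  apply Rlt_pow; [lra|exact H]. Qed.
Lemma e0 : e 0 = 1. Proof. unfold e. simpl. lra. Qed.
Lemma e1 : e 1 = / a. Proof. unfold e. simpl. rewrite Rmult_1_r. reflexivity. Qed.

Lemma nearest n p : exists q, Xs n q /\ d q p < e n.
Proof.
  destruct (classic (exists q, Xs n q /\ d q p < e n)) as [H|H]; auto.
  exfalso. destruct Hfill as [_ [_ Hm]]. destruct (Hm n) as [Hsep Hmax].
  set (B := fun y => Xs n y \/ y = p).
  assert (HB : separated d B (/ a ^ n)).
  { intros u v [Hu|Hu] [Hv|Hv] Huv.
    - apply Hsep; auto.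
    - subst v. apply Rnot_lt_le. intro Hlt. apply H. exists u. split; auto.
    - subst u. apply Rnot_lt_le. intro Hlt. apply H. exists v. split; auto. rewrite dsym. exact Hlt.
    - subst. congruence. }
  assert (Xs n p) by (apply (Hmax B HB); unfold B; auto).
  apply H. exists p. split; auto. rewrite dself. apply e_pos.
Qed.

Lemma adj_sym v w : E v w -> E w v.
Proof.
  intros [H1 [H2 [H3 H4]]]. split; [auto|split;[auto|split]].
  - intro; apply H3; auto.
  - destruct H4 as [[Hs [p [Hp1 Hp2]]]|[Hs [p [Hp1 Hp2]]]].
    + left. split; auto. exists p. rewrite <- Hs. auto.
    + right. split. lia. exists p. auto.
Qed.

Lemma walk_app v u w k1 k2 : walk E v u k1 -> walk E u w k2 -> walk E v w (k1 + k2).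
Proof. induction 1; intros; simpl; auto. econstructor; eauto. Qed.

Lemma walk_snoc v u w k : walk E v u k -> E u w -> walk E v w (S k).
Proof. intros H1 H2. replace (S k) with (k + 1)%nat by lia. eapply walk_app; eauto.
  econstructor; eauto. constructor. Qed.

Lemma walk_rev v w k : walk E v w k -> walk E w v k.
Proof. induction 1. constructor. eapply walk_snoc; eauto. apply adj_sym; auto. Qed.

Lemma parent p k : Xs (S k) p -> exists q, Xs k q /\ d q p < e k /\ E (p, S k) (q, k).
Proof.
  intro Hp. destruct (nearest k p) as [q [Hq Hd]]. exists q. split; auto. split; auto.
  split; [exact Hp|split;[exact Hq|split]].
  - intro Heq. inversion Heq. lia.
  - right. split. simpl; auto. exists p. unfold ball. simpl. split.
    + rewrite dself. apply (e_pos (S k)).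
    + exact Hd.
Qed.

Lemma ancestor k l p : (l <= k)%nat -> Xs k p ->
  exists q, Xs l q /\ walk E (p, k) (q, l) (k - l) /\ d q p <= a / (a - 1) * (e l - e k).
Proof.
  revert p. induction k as [|k IH]; intros p Hlk Hp.
  - assert (l = 0%nat) by lia. subst. exists p. split; auto. split. constructor.
    rewrite dself. lra.
  - destruct (Nat.eq_dec l (S k)) as [->|Hne].
    + exists p. split; auto. replace (S k - S k)%nat with 0%nat by lia. split. constructor.
      rewrite dself. lra.
    + destruct (parent p k Hp) as [q' [Hq' [Hd' He']]].
      destruct (IH q' ltac:(lia) Hq') as [q [Hq [Hw Hd]]].
      exists q. split; auto. split.
      * replace (S k - l)%nat with (S (k - l)) by lia. econstructor; eauto.
      * rewrite e_S. pose proof (dtri q q' p).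
        assert (a / (a - 1) * (e l - e k) + e k = a / (a - 1) * (e l - e k / a)) by (field; lra).
        lra.
Qed.

Lemma inS_v0 v : inS Xs v -> snd v = 0%nat -> v = (x0, 0%nat).
Proof. destruct v as [p k]; unfold inS; simpl; intros H ->. f_equal. apply Hfill. auto. Qed.

Lemma walk_to_v0 v : inS Xs v -> walk E v (x0, 0%nat) (snd v).
Proof.
  destruct v as [p k]. unfold inS; simpl. intro H.
  destruct (ancestor k 0 p ltac:(lia) H) as [q [Hq [Hw _]]].
  assert (q = x0) by (apply Hfill; auto). subst. rewrite Nat.sub_0_r in Hw. auto.
Qed.

Lemma connected v w : inS Xs v -> inS Xs w -> exists k, walk E v w k.
Proof.
  intros Hv Hw. exists (snd v + snd w)%nat. eapply walk_app. apply walk_to_v0; auto.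
  apply walk_rev, walk_to_v0; auto.
Qed.

Lemma min_exists (P : nat -> Prop) n : P n -> exists k, P k /\ forall j, P j -> (k <= j)%nat.
Proof.
  revert P. induction n as [n IH] using (well_founded_induction Wf_nat.lt_wf). intros P Hn.
  destruct (classic (exists j, (j < n)%nat /\ P j)) as [[j [Hj HPj]]|Hno].
  - eapply IH; eauto.
  - exists n. split; auto. intros j Hj. destruct (Compare_dec.le_lt_dec n j); auto. exfalso; eauto.
Qed.

Lemma D1_spec v w : inS Xs v -> inS Xs w ->
  exists k, D v w = INR k /\ walk E v w k /\ forall j, walk E v w j -> (k <= j)%nat.
Proof.
  intros Hv Hw. unfold D1, graph_dist.
  set (P := fun k => walk E v w k /\ forall j, walk E v w j -> (k <= j)%nat).
  assert (HP : exists k, P k).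
  { destruct (connected v w Hv Hw) as [k Hk]. apply (min_exists (walk E v w) k Hk). }
  pose proof (epsilon_spec (inhabits 0%nat) P HP) as Hs.
  eexists. split. reflexivity. exact Hs.
Qed.


Lemma adj_level v w : E v w -> (snd w <= S (snd v) /\ snd v <= S (snd w))%nat.
Proof. intros [_ [_ [_ [[H _]|[H _]]]]]; lia. Qed.

Lemma walk_level v w k : walk E v w k -> (snd w <= snd v + k /\ snd v <= snd w + k)%nat.
Proof. induction 1. lia. apply adj_level in H. lia. Qed.

Lemma D1_level v w k : inS Xs v -> inS Xs w -> D v w = INR k ->
  (snd w <= snd v + k /\ snd v <= snd w + k)%nat.
Proof.
  intros Hv Hw Hk. destruct (D1_spec v w Hv Hw) as [k0 [Hk0 [Hwk _]]].
  rewrite Hk0 in Hk. apply INR_eq in Hk. subst. apply walk_level; auto.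
Qed.

Lemma D1_le v w j : inS Xs v -> inS Xs w -> walk E v w j -> D v w <= INR j.
Proof.
  intros Hv Hw Hj. destruct (D1_spec v w Hv Hw) as [k0 [Hk0 [_ Hmin]]].
  rewrite Hk0. apply le_INR. auto.
Qed.

Lemma D1_sym v w : inS Xs v -> inS Xs w -> D v w = D w v.
Proof.
  intros Hv Hw. destruct (D1_spec v w Hv Hw) as [k1 [H1 [W1 M1]]].
  destruct (D1_spec w v Hw Hv) as [k2 [H2 [W2 M2]]].
  rewrite H1, H2. f_equal. apply Nat.le_antisymm; [apply M1|apply M2]; apply walk_rev; auto.
Qed.

Lemma D1_one v w : inS Xs v -> inS Xs w -> D v w = 1 -> E v w.
Proof.
  intros Hv Hw H. destruct (D1_spec v w Hv Hw) as [k [Hk [Wk _]]].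
  rewrite H in Hk. change 1 with (INR 1) in Hk. apply INR_eq in Hk. subst.
  inversion Wk as [|v' u w' k' Hvu Hw0]; subst. inversion Hw0; subst. auto.
Qed.

Lemma disp p k q k' : E (p, k) (q, k') -> d p q <= 2 * a * e (Nat.min k k').
Proof.
  intros [_ [_ [_ [[Hs [t [H1 H2]]]|[Hs [t [H1 H2]]]]]]]; unfold ball in *; simpl in *.
  - subst. rewrite Nat.min_id. unfold Rdiv in *. fold (e k') in H1, H2.
    pose proof (dtri p t q). rewrite (dsym t q) in H. pose proof (e_pos k').
    assert (lam * e k' <= a * e k') by (apply Rmult_le_compat_r; lra). lra.
  - pose proof (dtri p t q). rewrite (dsym t q) in H. fold (e k) in H1. fold (e k') in H2.
    destruct Hs as [->| ->].
    + replace (Nat.min (S k') k') with k' by lia. rewrite e_S in H1.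
      pose proof (e_pos k'). assert (e k' / a <= e k') by (apply Rmult_le_reg_r with a; [lra|]; field_simplify; nra). nra.
    + replace (Nat.min k (S k)) with k by lia. rewrite e_S in H2.
      pose proof (e_pos k). assert (e k / a <= e k) by (apply Rmult_le_reg_r with a; [lra|]; field_simplify; nra). nra.
Qed.

Lemma fdist_VV v w : fdist D (FVert v) (FVert w) = D w v.
Proof. reflexivity. Qed.

Lemma no_int_between (i s : nat) (t : R) : 0 < t < 1 -> t = INR s - INR i -> False.
Proof.
  intros Ht ->. destruct (Compare_dec.le_lt_dec s i) as [H|H].
  - apply le_INR in H. lra.
  - apply le_INR in H. rewrite S_INR in H. lra.
Qed.

Lemma geo_seq v w gam T :
  filling_geodesic d a lam Xs (FVert v) (FVert w) gam -> inS Xs v -> D w v = INR T ->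
  exists q : nat -> X * nat,
    (forall s, (s <= T)%nat -> gam (INR s) = FVert (q s) /\ inS Xs (q s)) /\
    q 0%nat = v /\ q T = w /\
    (forall s1 s2, (s1 <= T)%nat -> (s2 <= T)%nat -> D (q s2) (q s1) = Rabs (INR s1 - INR s2)) /\
    (forall s, (s < T)%nat -> E (q s) (q (S s))).
Proof.
  intros [H0 [HL [Hwf Hd]]] Hv HT. rewrite fdist_VV, HT in *.
  set (q := fun s => match gam (INR s) with FVert q => q | FEdge _ _ _ => v end).
  assert (Hq : forall s, (s <= T)%nat -> gam (INR s) = FVert (q s) /\ inS Xs (q s)).
  { intros s Hs. assert (Hr : 0 <= INR s <= INR T) by (split; [apply pos_INR|apply le_INR; auto]).
    pose proof (Hwf _ Hr) as Hw. pose proof (Hd 0 (INR s) ltac:(split; [lra|apply pos_INR]) Hr) as Hds.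
    rewrite H0 in Hds. unfold q. destruct (gam (INR s)) as [r|v1 w1 t] eqn:Eg.
    - split; auto.
    - exfalso. simpl in Hw, Hds. destruct Hw as [Hadj Ht].
      destruct Hadj as [Hv1 [Hw1 _]].
      destruct (D1_spec v1 v Hv1 Hv) as [i [Hi _]].
      destruct (D1_spec w1 v Hw1 Hv) as [j [Hj _]].
      rewrite Hi, Hj in Hds. rewrite Rminus_0_l, Rabs_Ropp, Rabs_right in Hds by (apply Rle_ge, pos_INR).
      unfold Rmin in Hds. destruct (Rle_dec _ _).
      + apply (no_int_between i s t Ht). lra.
      + apply (no_int_between j s (1 - t)); [lra|lra]. }
  exists q. split; [exact Hq|]. split; [|split; [|split]].
  - destruct (Hq 0%nat ltac:(lia)) as [E0 _]. simpl in E0. rewrite H0 in E0. congruence.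
  - destruct (Hq T ltac:(lia)) as [ET _]. rewrite HL in ET. congruence.
  - intros s1 s2 H1 H2. destruct (Hq s1 H1) as [E1 _]. destruct (Hq s2 H2) as [E2 _].
    rewrite <- (Hd (INR s1) (INR s2)). rewrite E1, E2. reflexivity.
    split; [apply pos_INR|apply le_INR; auto]. split; [apply pos_INR|apply le_INR; auto].
  - intros s Hs. destruct (Hq s ltac:(lia)) as [E1 I1]. destruct (Hq (S s) ltac:(lia)) as [E2 I2].
    apply adj_sym. apply D1_one; auto.
    assert (HH := Hd (INR s) (INR (S s))). rewrite E1, E2, fdist_VV in HH. rewrite HH.
    rewrite S_INR. replace (INR s - (INR s + 1)) with (- (1)) by ring. rewrite Rabs_Ropp, Rabs_R1. auto.
    split; [apply pos_INR|apply le_INR; lia]. split; [apply pos_INR|apply le_INR; lia].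
Qed.


Lemma CL pu ku pv kv l xi : Xs ku pu -> Xs kv pv -> (l <= ku)%nat -> (l <= kv)%nat ->
  (l = 0%nat \/ (d pu xi + a / (a - 1) * (e l - e ku) < lam * e l /\
                 d pv xi + a / (a - 1) * (e l - e kv) < lam * e l)) ->
  exists j, (j <= (ku - l) + (kv - l) + 1)%nat /\ walk E (pu, ku) (pv, kv) j.
Proof.
  intros Hu Hv Hlu Hlv Hc.
  destruct (ancestor ku l pu Hlu Hu) as [qu [Hqu [Wu Du]]].
  destruct (ancestor kv l pv Hlv Hv) as [qv [Hqv [Wv Dv]]].
  destruct (classic (qu = qv)) as [Heq|Hne].
  - subst qv. exists ((ku - l) + (kv - l))%nat. split. lia.
    eapply walk_app. exact Wu. apply walk_rev. exact Wv.
  - destruct Hc as [Hl0|[Cu Cv]].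
    + subst l. exfalso. apply Hne. transitivity x0; [|symmetry]; apply Hfill; auto.
    + exists ((ku - l) + S (kv - l))%nat. split. lia.
      eapply walk_app. exact Wu. econstructor. 2: apply walk_rev; exact Wv.
      split; [exact Hqu|split; [exact Hqv|split]].
      * intro H. inversion H. auto.
      * left. split. reflexivity. exists xi. unfold ball; simpl. unfold Rdiv. fold (e l). split.
        -- pose proof (dtri qu pu xi). lra.
        -- pose proof (dtri qv pv xi). lra.
Qed.

Lemma D1_CL pu ku pv kv l xi : Xs ku pu -> Xs kv pv -> (l <= ku)%nat -> (l <= kv)%nat ->
  (l = 0%nat \/ (d pu xi + a / (a - 1) * (e l - e ku) < lam * e l /\
                 d pv xi + a / (a - 1) * (e l - e kv) < lam * e l)) ->
  D (pu, ku) (pv, kv) <= INR ((ku - l) + (kv - l) + 1).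
Proof.
  intros Hu Hv H1 H2 Hc. destruct (CL pu ku pv kv l xi Hu Hv H1 H2 Hc) as [j [Hj Wj]].
  eapply Rle_trans. apply D1_le; eauto. apply le_INR; auto.
Qed.

Lemma GL (r : nat -> X * nat) (N M L : nat) :
  (forall i, (i <= N)%nat -> (M - i <= snd (r i))%nat /\ (L <= snd (r i))%nat) ->
  (forall i, (i < N)%nat -> d (fst (r i)) (fst (r (S i))) <= 2 * a * e (Nat.min (snd (r i)) (snd (r (S i))))) ->
  forall i, (i <= N)%nat ->
  d (fst (r 0%nat)) (fst (r i)) <= 2 * a * (a / (a - 1) * e (Nat.max (M - i) L) + e L * INR (i + L - M)).
Proof.
  intros Hlev Hstep i. induction i as [|i IH]; intro Hi.
  - rewrite dself. pose proof (e_pos (Nat.max (M - 0) L)). pose proof (e_pos L).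
    pose proof (pos_INR (0 + L - M)).
    assert (0 < a / (a - 1)) by (apply Rdiv_lt_0_compat; lra).
    assert (0 <= e L * INR (0 + L - M)) by (apply Rmult_le_pos; lra).
    assert (0 <= a / (a - 1) * e (Nat.max (M - 0) L)) by (apply Rmult_le_pos; lra).
    apply Rmult_le_pos; lra.
  - specialize (IH ltac:(lia)). pose proof (Hstep i ltac:(lia)) as Hs.
    destruct (Hlev i ltac:(lia)) as [A1 B1]. destruct (Hlev (S i) ltac:(lia)) as [A2 B2].
    pose proof (dtri (fst (r 0%nat)) (fst (r i)) (fst (r (S i)))) as Ht.
    destruct (Compare_dec.le_lt_dec (S i) (M - L)) as [Hc|Hc].
    + set (k := (M - S i)%nat).
      replace (Nat.max (M - i) L) with (S k) in IH by lia.
      replace (Nat.max k L) with k by lia.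
      replace (i + L - M)%nat with 0%nat in IH by lia.
      replace (S i + L - M)%nat with 0%nat by lia.
      assert (e (Nat.min (snd (r i)) (snd (r (S i)))) <= e k) by (apply e_le; lia).
      rewrite e_S in IH. simpl INR in *.
      assert (Hid : 2 * a * (a / (a - 1) * (e k / a) + e L * 0) + 2 * a * e k =
                    2 * a * (a / (a - 1) * e k + e L * 0)) by (field; lra).
      assert (2 * a * e (Nat.min (snd (r i)) (snd (r (S i)))) <= 2 * a * e k) by (apply Rmult_le_compat_l; lra).
      lra.
    + replace (Nat.max (M - i) L) with L in IH by lia.
      replace (Nat.max (M - S i) L) with L by lia.
      replace (S i + L - M)%nat with (S (i + L - M)) by lia. rewrite S_INR.
      assert (e (Nat.min (snd (r i)) (snd (r (S i)))) <= e L) by (apply e_le; lia).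
      assert (2 * a * e (Nat.min (snd (r i)) (snd (r (S i)))) <= 2 * a * e L) by (apply Rmult_le_compat_l; lra).
      lra.
Qed.

Lemma argmin (f : nat -> nat) N : exists i, (i <= N)%nat /\ forall j, (j <= N)%nat -> (f i <= f j)%nat.
Proof.
  induction N as [|N [i [Hi Hm]]].
  - exists 0%nat. split; auto. intros j Hj. replace j with 0%nat by lia. auto.
  - destruct (Compare_dec.le_lt_dec (f i) (f (S N))).
    + exists i. split. lia. intros j Hj. destruct (Nat.eq_dec j (S N)). subst; auto. apply Hm; lia.
    + exists (S N). split. lia. intros j Hj. destruct (Nat.eq_dec j (S N)). subst; auto.
      specialize (Hm j ltac:(lia)). lia.
Qed.

Lemma pow_bound i : 4 * INR i + 40 <= a ^ (i + 3) * (a * a - 1).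
Proof.
  induction i as [|i IH].
  - simpl. assert (a * a >= 6.76) by nra. assert (a * (a * a) >= 17.5) by nra.
    assert (a * (a * (a * 1)) * (a * a - 1) >= 17.5 * 5.76) by nra. lra.
  - rewrite S_INR. replace (S i + 3)%nat with (S (i + 3)) by lia. simpl pow.
    pose proof (pos_INR i).
    assert (a * (a ^ (i + 3) * (a * a - 1)) >= a * (4 * INR i + 40)) by (apply Rmult_ge_compat_l; lra).
    nra.
Qed.


Lemma aa1 : a / (a - 1) <= 2.
Proof. apply Rmult_le_reg_r with (a - 1). lra. unfold Rdiv. rewrite Rmult_assoc, Rinv_l by lra. lra. Qed.
Lemma aa1' : 1 <= a / (a - 1).
Proof. apply Rmult_le_reg_r with (a - 1). lra. unfold Rdiv. rewrite Rmult_assoc, Rinv_l by lra. lra. Qed.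
Lemma lam2 : 2 <= lam. Proof. pose proof aa1'. lra. Qed.

Lemma e_mul_lt k c : c < a ^ k -> c * e k < 1.
Proof.
  intro H. assert (0 < a ^ k) by (apply pow_lt; lra).
  apply Rmult_lt_reg_r with (a ^ k). auto. unfold e. rewrite Rmult_assoc, Rinv_l by lra. lra.
Qed.

Lemma cond_helper dd kk l : (l <= kk)%nat -> dd < e l -> dd + a / (a - 1) * (e l - e kk) < lam * e l.
Proof.
  intros H1 H2. pose proof (e_le _ _ H1). pose proof (e_pos kk). pose proof (e_pos l).
  pose proof aa1'.
  assert (a / (a - 1) * (e l - e kk) <= a / (a - 1) * e l) by (apply Rmult_le_compat_l; lra).
  assert ((1 + a / (a - 1)) * e l <= lam * e l) by (apply Rmult_le_compat_r; lra).
  lra.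
Qed.

Lemma cond_helper2 dd l : dd < 2 * e l -> dd + a / (a - 1) * (e l - e l) < lam * e l.
Proof.
  intros H. pose proof lam2. pose proof (e_pos l).
  assert (2 * e l <= lam * e l) by (apply Rmult_le_compat_r; lra).
  replace (e l - e l) with 0 by ring. lra.
Qed.

Lemma disp' v w : E v w -> d (fst v) (fst w) <= 2 * a * e (Nat.min (snd v) (snd w)).
Proof. destruct v, w. apply disp. Qed.

Lemma a3 : 4 * a + 1 < a ^ 3.
Proof. simpl. assert (a * a >= 6.76) by nra. nra. Qed.
Lemma a4 : 2 < a ^ 4.
Proof. simpl. assert (a * a >= 6.76) by nra. assert (a * a * (a * a) >= 45) by nra. nra. Qed.
Lemma a5 : 32 * a + 1 < a ^ 5.
Proof. simpl. assert (a * a >= 6.76) by nra. assert (a * a * (a * a) >= 45) by nra. nra. Qed.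

Lemma side (r : nat -> X * nat) N M z0 xi pu ku :
  (forall i, (i <= N)%nat -> inS Xs (r i) /\ snd (r i) = (M - i)%nat) ->
  (forall i, (i < N)%nat -> E (r i) (r (S i))) ->
  fst (r 0%nat) = z0 -> d z0 xi < e M -> Xs ku pu -> d pu xi < 2 * e ku -> (ku + N = M)%nat ->
  D (r N) (pu, ku) <= 7.
Proof.
  intros Hr Hadj H0 Hz Hu Hux HN.
  assert (G := GL r N M ku ltac:(intros i Hi; destruct (Hr i Hi) as [_ ->]; lia)
     ltac:(intros i Hi; apply disp'; auto) N ltac:(lia)).
  replace (Nat.max (M - N) ku) with ku in G by lia.
  replace (N + ku - M)%nat with 0%nat in G by lia. simpl INR in G. rewrite H0 in G.
  destruct (Hr N ltac:(lia)) as [HiN HlN].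
  destruct (r N) as [p k] eqn:ErN. simpl in HlN, G. replace k with ku in * by lia. clear HlN.
  pose proof aa1. pose proof (e_pos ku). pose proof (e_le ku M ltac:(lia)).
  assert (Hp : d p xi <= (4 * a + 1) * e ku).
  { pose proof (dtri p z0 xi). rewrite (dsym p z0) in H3.
    assert (2 * a * (a / (a - 1) * e ku + e ku * 0) <= 4 * a * e ku).
    { replace (2 * a * (a / (a - 1) * e ku + e ku * 0)) with ((2 * a * e ku) * (a / (a - 1))) by ring.
      replace (4 * a * e ku) with ((2 * a * e ku) * 2) by ring.
      apply Rmult_le_compat_l. assert (0 <= a * e ku) by (apply Rmult_le_pos; lra). lra. auto. }
    lra. }
  destruct (Compare_dec.le_lt_dec 3 ku) as [H3|H3].
  - set (l := (ku - 3)%nat).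
    assert (Hel : e ku = e l * e 3) by (rewrite <- e_add; f_equal; unfold l; lia).
    pose proof (e_pos l). pose proof (e_pos 3).
    eapply Rle_trans. apply (D1_CL p ku pu ku l xi); auto. unfold l; lia. unfold l; lia.
    right. split; apply cond_helper; try (unfold l; lia).
    + rewrite Hel in Hp. pose proof (e_mul_lt 3 _ a3). nra.
    + rewrite Hel in Hux. pose proof (e_mul_lt 3 2 ltac:(pose proof a3; lra)). nra.
    + replace (ku - l + (ku - l) + 1)%nat with 7%nat by (unfold l; lia). simpl. lra.
  - eapply Rle_trans. apply (D1_CL p ku pu ku 0 xi); auto. lia. lia.
    assert (INR (ku - 0 + (ku - 0) + 1) <= INR 7) by (apply le_INR; lia).
    eapply Rle_trans. exact H4. simpl; lra.
Qed.


Lemma absINR s1 s2 : (s2 <= s1)%nat -> Rabs (INR s1 - INR s2) = INR (s1 - s2) /\ Rabs (INR s2 - INR s1) = INR (s1 - s2).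
Proof.
  intro H. rewrite minus_INR by auto. pose proof (le_INR _ _ H). split.
  - rewrite Rabs_right; lra.
  - rewrite Rabs_left1; lra.
Qed.

Lemma D_v0 p k : Xs k p -> D (p, k) (x0, 0%nat) = INR k.
Proof.
  intro H. assert (Hv0 : inS Xs (x0, 0%nat)) by (apply Hfill; auto).
  destruct (D1_spec (p, k) (x0, 0%nat) H Hv0) as [j [Hj [Wj Mj]]].
  rewrite Hj. f_equal. apply walk_level in Wj. simpl in Wj.
  pose proof (Mj k (walk_to_v0 (p, k) H)). lia.
Qed.

Lemma seg_ok p q (gam : R -> fpoint (X * nat)) s u K K' eps :
  0 <= s <= fdist D p q -> (exists v, gam s = FVert v /\ D v u <= K) -> 0 < eps -> K <= K' ->
  exists r, segment D p q gam r /\ fdist D (FVert u) r < K' + eps.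
Proof.
  intros Hs [v [Hv HK]] He HKK. exists (gam s). split. exists s. auto.
  rewrite Hv, fdist_VV. lra.
Qed.


Lemma main_sec x y z w m n (u : X * nat) g1 g2 g3 :
  inS Xs (z, m) -> inS Xs (w, n) -> d z x < e m -> d w y < e n -> e m + e n < e 2 * d x y ->
  in_c d a Xs x y u ->
  filling_geodesic d a lam Xs (FVert (x0, 0%nat)) (FVert (z, m)) g1 ->
  filling_geodesic d a lam Xs (FVert (z, m)) (FVert (w, n)) g2 ->
  filling_geodesic d a lam Xs (FVert (w, n)) (FVert (x0, 0%nat)) g3 ->
  approx_center D 80 (FVert u) (FVert (x0, 0%nat)) (FVert (z, m)) (FVert (w, n)) g1 g2 g3.
Proof.
  intros Hzm Hwn Hx Hy Hsmall Hu H1 H2 H3.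
  destruct u as [pu ku]. destruct Hu as [HuS [Hux [Huy Hmax]]]. unfold ball, Rdiv in Hux, Huy.
  simpl in Hux, Huy. fold (e ku) in Hux, Huy. unfold inS in HuS. simpl in HuS.
  assert (Hv0 : inS Xs (x0, 0%nat)) by (apply Hfill; auto).
  pose proof (e_pos ku) as Eku. pose proof (e_pos 2) as E2.
  assert (He2 : 4 * e 2 < 1) by (apply e_mul_lt; simpl; nra).
  assert (Hxy4 : d x y < 4 * e ku).
  { pose proof (dtri x pu y). rewrite (dsym x pu) in H. lra. }
  assert (Hdxy0 : 0 <= d x y) by apply dnn.
  assert (H4e : e 2 * (4 * e ku) < e ku).
  { assert ((4 * e 2) * e ku < 1 * e ku) by (apply Rmult_lt_compat_r; lra). lra. }
  assert (e 2 * d x y <= e 2 * (4 * e ku)) by (apply Rmult_le_compat_l; lra).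
  pose proof (e_pos m). pose proof (e_pos n).
  assert (Hem : e m < e ku) by lra.
  assert (Hen : e n < e ku) by lra.
  assert (Hkm : (ku < m)%nat).
  { destruct (Compare_dec.le_lt_dec m ku) as [Hh|Hh]; auto. pose proof (e_le _ _ Hh). lra. }
  assert (Hkn : (ku < n)%nat).
  { destruct (Compare_dec.le_lt_dec n ku) as [Hh|Hh]; auto. pose proof (e_le _ _ Hh). lra. }
  assert (HxyB : e (S ku) < d x y).
  { destruct (nearest (S ku) x) as [q [Hq Hqx]]. apply Rnot_le_lt. intro Hle.
    assert (S ku <= ku)%nat; [|lia].
    apply (Hmax (q, S ku)); unfold inS, ball, Rdiv; cbn [fst snd]; fold (e (S ku)); auto.
    - pose proof (e_pos (S ku)). lra.
    - pose proof (dtri q x y). lra. }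
  split; [|split].
  -
    intros eps Heps.
    destruct (geo_seq _ _ g1 m H1 Hv0 (D_v0 z m Hzm)) as [q [Hq [Hq0 [HqT [Hqd Hqa]]]]].
    assert (Hlev : forall s, (s <= m)%nat -> snd (q s) = s).
    { intros s Hs. destruct (Hq s Hs) as [_ Is].
      pose proof (Hqd 0%nat s ltac:(lia) Hs) as D0. pose proof (Hqd m s ltac:(lia) Hs) as Dm.
      destruct (absINR s 0 ltac:(lia)) as [_ A0]. destruct (absINR m s Hs) as [Am _].
      rewrite A0, Nat.sub_0_r in D0. rewrite Am in Dm.
      rewrite Hq0 in D0. rewrite HqT in Dm.
      apply D1_level in D0; auto. apply D1_level in Dm; auto. simpl in *. lia. }
    apply (seg_ok _ _ g1 (INR ku) _ 7 80 eps); [ | | exact Heps | lra].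
    + rewrite fdist_VV, D_v0 by auto. split. apply pos_INR. apply le_INR. lia.
    + exists (q ku). split. apply Hq. lia.
      replace ku with (m - (m - ku))%nat at 1 by lia.
      apply (side (fun i => q (m - i)%nat) (m - ku) m z x pu ku); auto.
      * intros i Hi. split. apply Hq. lia. apply Hlev. lia.
      * intros i Hi. apply adj_sym. replace (m - i)%nat with (S (m - S i)) by lia. apply Hqa. lia.
      * simpl. rewrite Nat.sub_0_r, HqT. reflexivity.
      * lia.
  -
    intros eps Heps.
    destruct (D1_spec (w, n) (z, m) Hwn Hzm) as [T [HT [WT MT]]].
    destruct (geo_seq _ _ g2 T H2 Hzm HT) as [q [Hq [Hq0 [HqT [Hqd Hqa]]]]].
    assert (Hlev : forall s, (s <= T)%nat -> (m <= snd (q s) + s /\ n <= snd (q s) + (T - s))%nat).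
    { intros s Hs. destruct (Hq s Hs) as [_ Is].
      pose proof (Hqd 0%nat s ltac:(lia) Hs) as D0. pose proof (Hqd T s ltac:(lia) Hs) as Dm.
      destruct (absINR s 0 ltac:(lia)) as [_ A0]. destruct (absINR T s Hs) as [Am _].
      rewrite A0, Nat.sub_0_r in D0. rewrite Am in Dm.
      rewrite Hq0 in D0. rewrite HqT in Dm.
      apply D1_level in D0; auto. apply D1_level in Dm; auto. simpl in *. lia. }
    assert (HTb : (T + 2 * ku <= m + n + 2)%nat).
    { destruct (CL w n pu ku ku y Hwn HuS ltac:(lia) ltac:(lia)) as [j1 [Hj1 W1]].
      { right. split.
        - apply cond_helper. lia. lra.
        - apply cond_helper2. lra. }
      destruct (CL pu ku z m ku x HuS Hzm ltac:(lia) ltac:(lia)) as [j2 [Hj2 W2]].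
      { right. split.
        - apply cond_helper2. lra.
        - apply cond_helper. lia. lra. }
      pose proof (MT _ (walk_app _ _ _ _ _ W1 W2)). lia. }
    destruct (argmin (fun s => snd (q s)) T) as [st [Hst Hmin]].
    destruct (Hlev st Hst) as [Lm Ln].
    destruct (q st) as [ps Ls] eqn:Eqs.
    assert (Hmin' : forall i, (i <= T)%nat -> (Ls <= snd (q i))%nat).
    { intros i Hi. pose proof (Hmin i Hi) as Hm. cbv beta in Hm. try rewrite Eqs in Hm. simpl in Hm. exact Hm. }
    simpl in Lm, Ln.
    assert (HLm : (Ls <= m)%nat) by (pose proof (Hmin' 0%nat ltac:(lia)) as Hm; rewrite Hq0 in Hm; exact Hm).
    assert (GP := GL q st m Ls
       ltac:(intros i Hi; split; [pose proof (Hlev i ltac:(lia)); lia | apply Hmin'; lia])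
       ltac:(intros i Hi; apply disp'; apply Hqa; lia) st ltac:(lia)).
    rewrite Hq0, Eqs in GP. simpl fst in GP.
    replace (Nat.max (m - st) Ls) with Ls in GP by lia.
    assert (GS := GL (fun i => q (T - i)%nat) (T - st) n Ls
       ltac:(intros i Hi; split; [pose proof (Hlev (T - i)%nat ltac:(lia)); lia | apply Hmin'; lia])
       ltac:(intros i Hi; rewrite dsym, Nat.min_comm; apply disp'; replace (T - i)%nat with (S (T - S i)) by lia; apply Hqa; lia)
       (T - st) ltac:(lia)).
    simpl in GS. rewrite Nat.sub_0_r, HqT in GS. replace (T - (T - st))%nat with st in GS by lia.
    rewrite Eqs in GS. simpl fst in GS.
    replace (Nat.max (n - (T - st)) Ls) with Ls in GS by lia.
    set (c1 := (st + Ls - m)%nat) in GP. set (c2 := (T - st + Ls - n)%nat) in GS.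
    assert (Hc : (c1 + c2 + 2 * ku <= 2 * Ls + 2)%nat) by (unfold c1, c2; lia).
    pose proof aa1. pose proof aa1'. pose proof (e_pos Ls) as ELs.
    pose proof (pos_INR c1). pose proof (pos_INR c2).
    assert (HL6 : (Ls <= ku + 6)%nat).
    { destruct (Compare_dec.le_lt_dec Ls (ku + 6)) as [Hh|Hh]; auto. exfalso.
      set (i := (Ls - ku - 7)%nat).
      assert (Hci : INR (c1 + c2) <= 2 * INR i + 16).
      { replace (2 * INR i + 16) with (INR (2 * i + 16)) by (rewrite plus_INR, mult_INR; simpl; ring).
        apply le_INR. unfold i. lia. }
      rewrite plus_INR in Hci.
      assert (Hxy : d x y <= e m + e n + 2 * a * e Ls * (2 * (a / (a - 1)) + INR c1 + INR c2)).
      { pose proof (dtri x z y) as T1. pose proof (dtri z ps y) as T2. pose proof (dtri ps w y) as T3.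
        rewrite (dsym x z) in T1. rewrite (dsym ps w) in T3.
        assert (2 * a * (a / (a - 1) * e Ls + e Ls * INR c1) + 2 * a * (a / (a - 1) * e Ls + e Ls * INR c2)
                = 2 * a * e Ls * (2 * (a / (a - 1)) + INR c1 + INR c2)) by ring.
        lra. }
      assert (Hsplit : e Ls = e (S ku) * e (i + 6)) by (rewrite <- e_add; f_equal; unfold i; lia).
      assert (Hb : 2 * a * e Ls * (2 * (a / (a - 1)) + INR c1 + INR c2) <= e (S ku) * (1 - e 2)).
      { assert (Hpb := pow_bound i).
        assert (Hp : (4 * INR i + 40) * e (i + 3) <= a * a - 1).
        { pose proof (e_pos (i + 3)). assert (Hae : a ^ (i + 3) * e (i + 3) = 1) by (unfold e; field; apply pow_nonzero; lra).
          apply Rle_trans with ((a ^ (i + 3) * (a * a - 1)) * e (i + 3)).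
          apply Rmult_le_compat_r; lra.
          right. replace ((a ^ (i + 3) * (a * a - 1)) * e (i + 3)) with ((a ^ (i + 3) * e (i + 3)) * (a * a - 1)) by ring.
          rewrite Hae. ring. }
        assert (He3 : a * e 3 * (a * a - 1) = 1 - e 2) by (unfold e; simpl; field; lra).
        assert (He6 : e (i + 6) = e (i + 3) * e 3) by (rewrite <- e_add; f_equal; lia).
        assert (Hk : 2 * (a / (a - 1)) + INR c1 + INR c2 <= 2 * INR i + 20) by lra.
        pose proof (e_pos (S ku)). pose proof (e_pos (i + 3)). pose proof (e_pos 3).
        rewrite Hsplit, He6.
        assert (0 <= 2 * a * (e (S ku) * (e (i + 3) * e 3))) by (repeat apply Rmult_le_pos; lra).
        apply Rle_trans with (2 * a * (e (S ku) * (e (i + 3) * e 3)) * (2 * INR i + 20)).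
        apply Rmult_le_compat_l; lra.
        replace (2 * a * (e (S ku) * (e (i + 3) * e 3)) * (2 * INR i + 20)) with
          (e (S ku) * (a * e 3) * ((4 * INR i + 40) * e (i + 3))) by ring.
        rewrite <- He3. replace (e (S ku) * (a * e 3 * (a * a - 1))) with (e (S ku) * (a * e 3) * (a * a - 1)) by ring.
        apply Rmult_le_compat_l. apply Rmult_le_pos; [lra|]. apply Rmult_le_pos; lra. exact Hp. }
      assert (d x y * (1 - e 2) <= e (S ku) * (1 - e 2)) by lra.
      assert (e (S ku) * (1 - e 2) < d x y * (1 - e 2)) by (apply Rmult_lt_compat_r; lra).
      lra. }
    apply (seg_ok _ _ g2 (INR st) _ 16 80 eps); [ | | exact Heps | lra].
    + rewrite fdist_VV, HT. split. apply pos_INR. apply le_INR. lia.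
    + exists (ps, Ls). split. rewrite <- Eqs. apply Hq. lia.
      assert (Hps : inS Xs (ps, Ls)) by (rewrite <- Eqs; apply Hq; lia).
      unfold inS in Hps; simpl in Hps.
      assert (Hc1 : INR c1 <= 14) by (replace 14 with (INR 14) by (simpl; ring); apply le_INR; lia).
      assert (Hpx : d ps x <= (32 * a + 1) * e Ls).
      { pose proof (dtri ps z x) as T1. rewrite (dsym ps z) in T1. pose proof (e_le _ _ HLm).
        assert (2 * a * (a / (a - 1) * e Ls + e Ls * INR c1) <= 2 * a * (e Ls * 16)).
        { apply Rmult_le_compat_l. lra. nra. }
        lra. }
      destruct (Compare_dec.le_lt_dec 7 Ls) as [HL5|HL5].
      * set (l := (Ls - 7)%nat).
        assert (Hel : e Ls = e l * e 7) by (rewrite <- e_add; f_equal; unfold l; lia).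
        assert (Hel4 : e ku <= e l * e 1) by (rewrite <- e_add; apply e_le; unfold l; lia).
        pose proof (e_pos l). pose proof (e_pos 7). pose proof (e_pos 1).
        assert (a7 : 32 * a + 1 < a ^ 7).
        { pose proof a5. replace (a ^ 7) with (a ^ 5 * (a * a)) by (simpl; ring).
          assert (0 < a ^ 5) by (apply pow_lt; lra). nra. }
        eapply Rle_trans. apply (D1_CL ps Ls pu ku l x); auto. unfold l; lia. unfold l; lia.
        right. split; apply cond_helper; try (unfold l; lia).
        -- rewrite Hel in Hpx. pose proof (e_mul_lt 7 _ a7). nra.
        -- pose proof (e_mul_lt 1 2 ltac:(simpl; lra)). nra.
        -- replace 16 with (INR 16) by (simpl; ring). apply le_INR. unfold l; lia.
      * eapply Rle_trans. apply (D1_CL ps Ls pu ku 0 x); auto. lia. lia.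
        replace 16 with (INR 16) by (simpl; ring). apply le_INR. lia.
  -
    intros eps Heps.
    assert (Dn : D (x0, 0%nat) (w, n) = INR n) by (rewrite D1_sym by auto; apply D_v0; auto).
    destruct (geo_seq _ _ g3 n H3 Hwn Dn) as [q [Hq [Hq0 [HqT [Hqd Hqa]]]]].
    assert (Hlev : forall s, (s <= n)%nat -> snd (q s) = (n - s)%nat).
    { intros s Hs. destruct (Hq s Hs) as [_ Is].
      pose proof (Hqd 0%nat s ltac:(lia) Hs) as D0. pose proof (Hqd n s ltac:(lia) Hs) as Dm.
      destruct (absINR s 0 ltac:(lia)) as [_ A0]. destruct (absINR n s Hs) as [Am _].
      rewrite A0, Nat.sub_0_r in D0. rewrite Am in Dm.
      rewrite Hq0 in D0. rewrite HqT in Dm.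
      apply D1_level in D0; auto. apply D1_level in Dm; auto. simpl in *. lia. }
    apply (seg_ok _ _ g3 (INR (n - ku)) _ 7 80 eps); [ | | exact Heps | lra].
    + rewrite fdist_VV, Dn. split. apply pos_INR. apply le_INR. lia.
    + exists (q (n - ku)%nat). split. apply Hq. lia.
      apply (side q (n - ku) n w y pu ku); auto.
      * intros i Hi. split. apply Hq. lia. apply Hlev. lia.
      * intros i Hi. apply Hqa. lia.
      * rewrite Hq0. reflexivity.
      * lia.
Qed.

End Main.

Theorem lemma2p6 (X : Type) (d : X -> X -> R) (a lam : R) (x0 : X)
  (Xs : nat -> X -> Prop)
  (Hmet : is_metric d) (Hcpt : compact_space d) (Hdiam : diam_eq d (1 / 2))
  (Hal : lam <= a) (Hl2 : 2 <= lam) (Hla : 1 + a / (a - 1) <= lam)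
  (Hfill : hyperbolic_filling d a x0 Xs)
  (x y z w : X) (m n : nat)
  (Hzm : inS Xs (z, m)) (Hwn : inS Xs (w, n))
  (Hx : ball d z (/ a ^ m) x) (Hy : ball d w (/ a ^ n) y)
  (Hsmall : / a ^ m + / a ^ n < / a ^ 2 * d x y)
  (u : X * nat) (Hu : in_c d a Xs x y u)
  (g1 g2 g3 : R -> fpoint (X * nat))
  (H1 : filling_geodesic d a lam Xs (FVert (x0, 0%nat)) (FVert (z, m)) g1)
  (H2 : filling_geodesic d a lam Xs (FVert (z, m)) (FVert (w, n)) g2)
  (H3 : filling_geodesic d a lam Xs (FVert (w, n)) (FVert (x0, 0%nat)) g3) :
  approx_center (D1 d a lam Xs) 80 (FVert u)
    (FVert (x0, 0%nat)) (FVert (z, m)) (FVert (w, n)) g1 g2 g3.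
Proof.
  assert (Ha : 13 / 5 <= a).
  { assert (Hq : a / (a - 1) * (a - 1) = a) by (field; lra).
    assert (a / (a - 1) <= a - 1) by lra.
    assert (a <= (a - 1) * (a - 1)) by (rewrite <- Hq at 1; apply Rmult_le_compat_r; lra).
    nra. }
  exact (main_sec X d a lam x0 Xs Hmet Ha Hal Hla Hfill x y z w m n u g1 g2 g3 Hzm Hwn Hx Hy Hsmall Hu H1 H2 H3).
Qed.
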